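(* Let $n\ge 2$, $c_1,\dots,c_n>0$, and fix $i\in\{1,\dots,n\}$. Let $Q_i\in\mathbb{R}^{n\times n}$ be the symmetric matrix with $(Q_i)_{ii}=\frac{n-2}{c_i^2}$, $(Q_i)_{jj}=\frac{1}{c_j^2}$ and $(Q_i)_{ij}=(Q_i)_{ji}=-\frac{1}{c_ic_j}$ for $j\neq i$, and all other entries $0$. Let $c_o=\max_{j\neq i}c_j$ and $c_*=\min_{j\neq i}c_j$, and $S=\sum_{j=1,j\neq i}^n\frac{1}{c_j^2}$. Then every eigenvalue $\lambda$ of $Q_i$ satisfies $$\frac{1}{2}\left(\frac{n-2}{c_i^2}+\frac{1}{c_o^2}-\frac{1}{c_i}\sqrt{\left(\frac{n-2}{c_i}-\frac{c_i}{c_o^2}\right)^2+4S}\right)\ \le\ \lambda\ \le\ \frac{1}{2}\left(\frac{n-2}{c_i^2}+\frac{1}{c_*^2}+\frac{1}{c_i}\sqrt{\left(\frac{n-2}{c_i}-\frac{c_i}{c_*^2}\right)^2+4S}\right).$$ *)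

(* Defs.v *)
From HB Require Import structures.
From mathcomp Require Import all_boot all_order all_algebra.
Set Implicit Arguments. Unset Strict Implicit. Unset Printing Implicit Defensive.
Import Order.TTheory GRing.Theory Num.Theory.
Local Open Scope ring_scope.

Definition Qmat (R : fieldType) (n : nat) (c : 'I_n -> R) (i : 'I_n) : 'M[R]_n :=
  \matrix_(k, l)
    if k == l then
      (if k == i then (n - 2)%:R / (c i ^+ 2) else 1 / (c k ^+ 2))
    else if k == i then - 1 / (c i * c l)
    else if l == i then - 1 / (c k * c i)
    else 0.

(* Main.v *)
Require Import Defs.
From HB Require Import structures.
From mathcomp Require Import all_boot all_order all_algebra.
From mathcomp Require Import ring lra.
Import Order.TTheory GRing.Theory Num.Theory.
Local Open Scope ring_scope.

Lemma col_eq (R : fieldType) n (c : 'I_n -> R) i (v : 'rV_n) k :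
  (v *m Qmat c i) 0 k =
  if k == i then v 0 i * ((n - 2)%:R / (c i ^+ 2))
                 + \sum_(l | l != i) v 0 l * (- 1 / (c l * c i))
  else v 0 i * (- 1 / (c i * c k)) + v 0 k * (1 / (c k ^+ 2)).
Proof.
rewrite mxE (bigD1 i) //= !mxE.
have [->|ki] := eqVneq k i.
  rewrite eqxx; congr (_ + _); apply: eq_bigr => l li.
  by rewrite !mxE (negbTE li) eqxx.
rewrite eqxx; congr (_ + _).
rewrite (bigD1 k) //= ?ki // !mxE eqxx (negbTE ki) big1 ?addr0 //.
move=> l /andP[li lk]; by rewrite !mxE (negbTE lk) (negbTE li) (negbTE ki) mulr0.
Qed.

Lemma key (R : fieldType) n (c : 'I_n -> R) (hc : forall j, c j != 0) i
  (v : 'rV_n) lam (hv : v *m Qmat c i = lam *: v) (v0 : v != 0)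
  (hd : forall j, j != i -> 1 / (c j ^+ 2) - lam != 0) :
  (n - 2)%:R / (c i ^+ 2) - lam =
  1 / (c i ^+ 2) * \sum_(l | l != i) 1 / (c l ^+ 2 * (1 / (c l ^+ 2) - lam)).
Proof.
have E k : (v *m Qmat c i) 0 k = lam * v 0 k by rewrite hv mxE.
have Vj j : j != i -> v 0 j = v 0 i / (c i * c j * (1 / (c j ^+ 2) - lam)).
  move=> ji; have := E j; rewrite col_eq (negbTE ji) => h.
  have hdj := hd j ji; have hcj := hc j; have hci := hc i.
  have h2 : v 0 j * (1 / (c j ^+ 2) - lam) = v 0 i / (c i * c j).
    apply/eqP; rewrite -subr_eq0 -(subrr (lam * v 0 j)) -{1}h; apply/eqP.
    field; by rewrite hcj hci.
  rewrite -[v 0 j](mulfK hdj) h2; move: hdj; move: (1 / c j ^+ 2 - lam) => d hdj; field; by rewrite hdj hcj hci.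
have vi0 : v 0 i != 0.
  apply/eqP => vi0; move/eqP: v0; apply; apply/rowP => j; rewrite !mxE.
  have [->|ji] := eqVneq j i; first by rewrite vi0.
  by rewrite Vj // vi0 mul0r.
have := E i; rewrite col_eq eqxx.
under eq_bigr => l li do rewrite Vj //.
set D := (n - 2)%:R / _.
have -> : \sum_(l | l != i) v 0 i / (c i * c l * (1 / (c l ^+ 2) - lam)) *
             (-1 / (c l * c i)) =
   v 0 i * (1 / (c i ^+ 2)) * - \sum_(l | l != i) 1 / (c l ^+ 2 * (1 / (c l ^+ 2) - lam)).
  rewrite -sumrN mulr_sumr; apply: eq_bigr => l li.
  have hdj := hd l li; have hcj := hc l; have hci := hc i.
  move: hdj; move: (1 / c l ^+ 2 - lam) => d hdj; field; by rewrite hdj hcj hci.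
set X := \sum_(l | _) _ => h.
apply: (mulfI vi0).
apply/eqP; rewrite -subr_eq0 -(subrr (lam * v 0 i)) -{1}h; apply/eqP; ring.
Qed.

Lemma sum_bd (R : realFieldType) n (i : 'I_n) (c e : 'I_n -> R) m :
  0 < m -> (forall l, l != i -> m <= e l) ->
  \sum_(l | l != i) 1 / (c l ^+ 2 * e l) <= (\sum_(l | l != i) 1 / (c l ^+ 2)) / m.
Proof.
move=> m0 me; rewrite mulr_suml; apply: ler_sum => l li; rewrite !div1r invfM.
apply: ler_wpM2l; first by rewrite invr_ge0 sqr_ge0.
rewrite lef_pV2 ?posrE ?me //; exact: lt_le_trans (me l li).
Qed.

Lemma quad_lo (R : realFieldType) (D b K s lam : R) : 0 <= s ->
  s ^+ 2 = (D - b) ^+ 2 + 4 * K -> 0 <= K ->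
  lam < 1 / 2 * (D + b - s) -> [/\ lam < D, lam < b & K < (D - lam) * (b - lam)].
Proof.
move=> s0 hs K0 hl.
have h1 : D - b <= s by nra.
have h2 : b - D <= s by nra.
split; [lra | lra | nra].
Qed.

Lemma quad_hi (R : realFieldType) (D b K s lam : R) : 0 <= s ->
  s ^+ 2 = (D - b) ^+ 2 + 4 * K -> 0 <= K ->
  1 / 2 * (D + b + s) < lam -> [/\ D < lam, b < lam & K < (lam - D) * (lam - b)].
Proof.
move=> s0 hs K0 hl.
have h1 : D - b <= s by nra.
have h2 : b - D <= s by nra.
split; [lra | lra | nra].
Qed.

Theorem mainTheorem6 (R : rcfType) (n : nat) (hn : (2 <= n)%N)
  (c : 'I_n -> R) (hc : forall j, 0 < c j) (i : 'I_n)
  (co cs : R)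
  (hco : (exists2 j, j != i & c j = co) /\ (forall j, j != i -> c j <= co))
  (hcs : (exists2 j, j != i & c j = cs) /\ (forall j, j != i -> cs <= c j))
  (lambda : R) (hl : eigenvalue (Qmat c i) lambda) :
  let S := \sum_(j | j != i) 1 / (c j ^+ 2) in
  (1 / 2) * ((n - 2)%:R / (c i ^+ 2) + 1 / (co ^+ 2)
     - (1 / c i) * Num.sqrt (((n - 2)%:R / c i - c i / (co ^+ 2)) ^+ 2 + 4 * S))
  <= lambda /\
  lambda <= (1 / 2) * ((n - 2)%:R / (c i ^+ 2) + 1 / (cs ^+ 2)
     + (1 / c i) * Num.sqrt (((n - 2)%:R / c i - c i / (cs ^+ 2)) ^+ 2 + 4 * S)).
Proof.
move=> S.
have hc0 j : c j != 0 by rewrite gt_eqF.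
have ci0 := hc0 i.
have S0 : 0 <= S by apply: sumr_ge0 => j _; rewrite div1r invr_ge0 sqr_ge0.
have K0 : 0 <= S / c i ^+ 2 by rewrite divr_ge0 ?sqr_ge0.
have sfact (x : R) : 0 < x ->
  0 <= 1 / c i * Num.sqrt (((n - 2)%:R / c i - c i / (x ^+ 2)) ^+ 2 + 4 * S) /\
  (1 / c i * Num.sqrt (((n - 2)%:R / c i - c i / (x ^+ 2)) ^+ 2 + 4 * S)) ^+ 2
  = ((n - 2)%:R / (c i ^+ 2) - 1 / (x ^+ 2)) ^+ 2 + 4 * (S / c i ^+ 2).
  move=> x0; split; first by rewrite mulr_ge0 ?sqrtr_ge0 // divr_ge0 ?ltW.
  rewrite exprMn sqr_sqrtr; last by rewrite addr_ge0 ?sqr_ge0 // mulr_ge0.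
  have x0' : x != 0 by rewrite gt_eqF.
  by field; rewrite ci0 x0'.
case: hco => [[jo jon <-] hco]; case: hcs => [[js jsn <-] hcs].
have [v hv v0] := eigenvalueP hl.
set D := (n - 2)%:R / (c i ^+ 2).
split.
  rewrite leNgt; apply/negP => hlt.
  have [sL0 sL2] := sfact (c jo) (hc jo).
  have [hD hb hK] := @quad_lo _ _ _ _ _ _ sL0 sL2 K0 hlt.
  have hmono j : j != i -> 1 / (c jo ^+ 2) <= 1 / (c j ^+ 2).
    move=> ji; rewrite !div1r lef_pV2 ?posrE ?exprn_gt0 // ler_sqr ?nnegrE ?(ltW (hc _)) //.
    exact: hco.
  have hd j : j != i -> 1 / (c j ^+ 2) - lambda != 0.
    by move=> ji; rewrite subr_eq0 gt_eqF // (lt_le_trans hb (hmono j ji)).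
  have E := @key _ _ _ hc0 _ _ _ hv v0 hd.
  have hS := @sum_bd R n i c (fun l => 1 / (c l ^+ 2) - lambda)
     (1 / (c jo ^+ 2) - lambda).
  have {}hS : \sum_(l | l != i) 1 / (c l ^+ 2 * (1 / (c l ^+ 2) - lambda))
      <= S / (1 / (c jo ^+ 2) - lambda).
    apply: hS; first by rewrite subr_gt0.
    by move=> l li; have := hmono l li; lra.
  have : (D - lambda) * (1 / (c jo ^+ 2) - lambda) <= S / c i ^+ 2.
    rewrite -ler_pdivlMr ?subr_gt0 // E.
    apply: le_trans (ler_wpM2l _ hS) _; first by rewrite div1r invr_ge0 sqr_ge0.
    rewrite le_eqVlt; apply/orP; left; apply/eqP; ring.
  by move=> h; have := lt_le_trans hK h; rewrite ltxx.
rewrite leNgt; apply/negP => hlt.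
have [sL0 sL2] := sfact (c js) (hc js).
have [hD hb hK] := @quad_hi _ _ _ _ _ _ sL0 sL2 K0 hlt.
have hmono j : j != i -> 1 / (c j ^+ 2) <= 1 / (c js ^+ 2).
  move=> ji; rewrite !div1r lef_pV2 ?posrE ?exprn_gt0 // ler_sqr ?nnegrE ?(ltW (hc _)) //.
  exact: hcs.
have hd j : j != i -> 1 / (c j ^+ 2) - lambda != 0.
  by move=> ji; rewrite subr_eq0 lt_eqF // (le_lt_trans (hmono j ji) hb).
have E := @key _ _ _ hc0 _ _ _ hv v0 hd.
have E' : lambda - D = 1 / c i ^+ 2 *
    \sum_(l | l != i) 1 / (c l ^+ 2 * (lambda - 1 / (c l ^+ 2))).
  rewrite -opprB E -mulrN -sumrN; congr (_ * _); apply: eq_bigr => l _.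
  by rewrite -[lambda - _]opprB mulrN invrN mulrN.
have hS := @sum_bd R n i c (fun l => lambda - 1 / (c l ^+ 2))
   (lambda - 1 / (c js ^+ 2)).
have {}hS : \sum_(l | l != i) 1 / (c l ^+ 2 * (lambda - 1 / (c l ^+ 2)))
    <= S / (lambda - 1 / (c js ^+ 2)).
  apply: hS; first by rewrite subr_gt0.
  by move=> l li; have := hmono l li; lra.
have : (lambda - D) * (lambda - 1 / (c js ^+ 2)) <= S / c i ^+ 2.
  rewrite -ler_pdivlMr ?subr_gt0 // E'.
  apply: le_trans (ler_wpM2l _ hS) _; first by rewrite div1r invr_ge0 sqr_ge0.
  rewrite le_eqVlt; apply/orP; left; apply/eqP; ring.
by move=> h; have := lt_le_trans hK h; rewrite ltxx.
Qed.
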